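(* Let $N\ge2$, $d\ge1$, $E,S\subset\mathbb{Z}_N^d$ with $$|E|\cdot|S|<\frac{N^d}{4}.$$ Let $1_E$ be the indicator function of $E$, let $r(x)=\sum_{m\notin S}\chi(x\cdot m)\widehat{1_E}(m)$, and let $G(x)=1$ if $|r(x)|\ge 1/2$ and $G(x)=0$ otherwise. Then $G(x)=1_E(x)$ for all $x\in\mathbb{Z}_N^d$ (i.e., $E$ is recovered by the Direct Rounding Algorithm).
   Context: $\chi(t)=e^{2\pi i t/N}$ for $t\in\mathbb{Z}_N$, $x\cdot m=\sum_i x_im_i$ mod $N$, and $\widehat{1_E}(m)=N^{-d}\sum_{x\in E}\chi(-x\cdot m)$. Thus $r$ is the inverse Fourier transform of $\widehat{1_E}$ with the frequencies in $S$ set to zero. *)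

(* Defs.v *)
From mathcomp Require Import all_boot all_order all_algebra all_field.
Set Implicit Arguments. Unset Strict Implicit. Unset Printing Implicit Defensive.
Import Order.TTheory GRing.Theory Num.Theory.
Local Open Scope ring_scope.

(* Complex numbers: algC.  N.-root (-1) is the N-th root of -1 with minimal
   non-negative argument, i.e. exp(i*pi/N); hence omega N = exp(2*pi*i/N). *)
Definition omega (N : nat) : algC := (N.-root (-1)) ^+ 2.

Definition chi (N : nat) (t : 'Z_N) : algC := omega N ^+ (val t).

Definition dotZ (N d : nat) (x m : 'rV['Z_N]_d) : 'Z_N :=
  \sum_(i < d) x 0 i * m 0 i.

Definition hat1 (N d : nat) (E : {set 'rV['Z_N]_d}) (m : 'rV['Z_N]_d) : algC :=
  (N%:R ^+ d)^-1 * \sum_(x in E) chi (- dotZ x m).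

Definition rfun (N d : nat) (E S : {set 'rV['Z_N]_d}) (x : 'rV['Z_N]_d) : algC :=
  \sum_(m | m \notin S) chi (dotZ x m) * hat1 E m.

Definition Gfun (N d : nat) (E S : {set 'rV['Z_N]_d}) (x : 'rV['Z_N]_d) : algC :=
  if 2^-1 <= `|rfun E S x| then 1 else 0.

(* Main.v *)
Require Import Defs.
From mathcomp Require Import all_boot all_order all_algebra all_field.
From mathcomp Require Import ring lra.
Import Order.TTheory GRing.Theory Num.Theory.
Local Open Scope ring_scope.

Lemma unit_nz (a : algC) : `|a| = 1 -> a != 0.
Proof. by move=> h; apply/eqP => a0; move: h; rewrite a0 normr0 => /eqP; rewrite eq_sym oner_eq0. Qed.

Lemma unit_conj (a : algC) : `|a| = 1 -> a^* = a^-1.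
Proof.
move=> h; have : a * a^* = 1 by rewrite -normCK h expr1n.
move=> e; have a0 := @unit_nz a h.
by rewrite -[a^*]mul1r -(mulVf a0) -mulrA e mulr1.
Qed.

Lemma w_conj (a : algC) : `|a| = 1 -> a != 1 -> ((1 - a)^-1)^* = 1 - (1 - a)^-1.
Proof.
move=> h a1; have a0 := @unit_nz a h.
have b0 : 1 - a != 0 by rewrite subr_eq0 eq_sym.
have e : (1 - a)^* = 1 - a^-1 by rewrite rmorphB rmorph1; congr (_ - _); exact: unit_conj.
have -> : ((1 - a)^-1)^* = ((1 - a)^*)^-1 by exact: fmorphV. rewrite e; field.
by rewrite b0 a0 subr_eq0 a1.
Qed.

Lemma w_norm (a : algC) : `|a| = 1 -> a != 1 ->
  (1 - a)^-1 - ((1 - a)^-1)^+2 = (2 - 2 * 'Re a)^-1.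
Proof.
move=> h a1; have a0 := @unit_nz a h.
have b0 : 1 - a != 0 by rewrite subr_eq0 eq_sym.
have -> : (1 - a)^-1 - ((1 - a)^-1)^+2 = (1 - a)^-1 * ((1 - a)^-1)^* .
  by rewrite w_conj // mulrBr mulr1 expr2.
have -> : ((1 - a)^-1)^* = ((1 - a)^*)^-1 by exact: fmorphV.
have e : (1 - a)^* = 1 - a^-1 by rewrite rmorphB rmorph1; congr (_ - _); exact: unit_conj.
rewrite e ReE.
have -> : a^* = a^-1 by exact: unit_conj.
field.
have -> : 2 * a - (a * a + 1) = - (a - 1) ^+ 2 by ring.
by rewrite a0 b0 oppr_eq0 expf_eq0 /= subr_eq0 a1.
Qed.

Lemma Re_lt1 (a : algC) : `|a| = 1 -> a != 1 -> 0 < 2 - 2 * 'Re a.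
Proof.
move=> h a1; rewrite -invr_gt0 -w_norm //.
have b0 : 1 - a != 0 by rewrite subr_eq0 eq_sym.
have -> : (1 - a)^-1 - ((1 - a)^-1)^+2 = (1 - a)^-1 * ((1 - a)^-1)^* .
  by rewrite w_conj // mulrBr mulr1 expr2.
by rewrite mul_conjC_gt0 invr_eq0.
Qed.

Lemma geom0 (b : algC) (q : nat) : b ^+ q = 1 -> b != 1 -> \sum_(i < q) b ^+ i = 0.
Proof.
move=> bq b1; have := subrX1 b q; rewrite bq subrr => /esym/eqP.
by rewrite mulf_eq0 subr_eq0 (negbTE b1) => /eqP.
Qed.

Lemma inv1B (a u : algC) (q : nat) : a ^+ q = u -> a != 1 -> u != 1 ->
  (1 - a)^-1 = (\sum_(j < q) a ^+ j) / (1 - u).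
Proof.
move=> aq a1 u1.
have b0 : 1 - a != 0 by rewrite subr_eq0 eq_sym.
have c0 : 1 - u != 0 by rewrite subr_eq0 eq_sym.
have e : 1 - u = (1 - a) * \sum_(j < q) a ^+ j.
  by rewrite -aq -opprB subrX1 -mulNr opprB.
have s0 : \sum_(j < q) a ^+ j != 0 by apply: contraNneq c0 => s0; rewrite e s0 mulr0.
by rewrite e invfM mulrCA mulfV ?mulr1.
Qed.

Lemma sumw_lem (x0 z u : algC) (q : nat) : (0 < q)%N -> q.-primitive_root z ->
  x0 ^+ q = u -> u != 1 ->
  \sum_(i < q) (1 - x0 * z ^+ i)^-1 = q%:R * (1 - u)^-1.
Proof.
move=> q0 zp x0q u1.
have zq : z ^+ q = 1 by exact: prim_expr_order.
have aq (i : nat) : (x0 * z ^+ i) ^+ q = u by rewrite exprMn exprAC zq expr1n mulr1.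
have a1 (i : nat) : x0 * z ^+ i != 1 by apply: contraNneq u1 => e; rewrite -(aq i) e expr1n.
under eq_bigr => i _ do rewrite (@inv1B _ _ _ (aq i) (a1 i) u1).
rewrite -mulr_suml; congr (_ * _).
rewrite exchange_big /=.
under eq_bigr => j _ do (under eq_bigr => i _ do rewrite exprMn -exprM mulnC exprM).
under eq_bigr => j _ do rewrite -mulr_sumr.
move: q0 zp zq {aq a1 x0q}; case: q => // q' q1 zp zq.
rewrite big_ord_recl /= expr0 mul1r.
under eq_bigr => i _ do rewrite expr1n.
rewrite sumr_const card_ord big1 ?addr0 //.
move=> j _; rewrite geom0 ?mulr0 //.
  by rewrite exprAC zq expr1n.
rewrite -(prim_order_dvd zp) /bump /= add1n.
by apply/negP => /(dvdn_leq (ltn0Sn _)); rewrite ltnS leqNgt ltn_ord.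
Qed.

Lemma rootRe (u : algC) (q : nat) : `|u| = 1 -> u != 1 -> (1 < q)%N ->
  exists x, x ^+ q = u /\ 'Re u < 'Re x.
Proof.
move=> hu u1 q1; have q0 : (0 < q)%N by apply: ltnW.
have [z zp] := C_prim_root_exists q0.
pose x0 := q.-root u; have x0q : x0 ^+ q = u by exact: rootCK.
pose a (i : 'I_q) := x0 * z ^+ i.
have zq : z ^+ q = 1 by exact: prim_expr_order.
have aq i : a i ^+ q = u by rewrite /a exprMn exprAC zq expr1n mulr1.
have an i : `|a i| = 1.
  apply/eqP; rewrite -(pexpr_eq1 q0) ?normr_ge0 // -normrX aq hu //.
have a1 i : a i != 1 by apply: contraNneq u1 => e; rewrite -(aq i) e expr1n.
case: (boolP [exists i : 'I_q, 'Re u < 'Re (a i)]) => [/existsP [i Hi] | H].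
  by exists (a i).
exfalso.
have Hle i : 'Re (a i) <= 'Re u.
  rewrite real_leNgt ?algCreal_Re //; apply: contra H => Hi.
  by apply/existsP; exists i.
pose W := (1 - u)^-1.
pose w i := (1 - a i)^-1.
pose zz i := w i - W.
have sumw : \sum_i w i = q%:R * W by exact: sumw_lem.
have Wc : W^* = 1 - W by exact: w_conj.
have wc i : (w i)^* = 1 - w i by exact: w_conj.
have zc i : (zz i)^* = - zz i.
  have -> : (zz i)^* = (w i)^* - W^* by rewrite /zz rmorphB.
  by rewrite Wc wc /zz; ring.
have Dge i : 0 <= (W - W^+2) - (w i - (w i)^+2).
  rewrite /W /w !w_norm // subr_ge0 lef_pV2 ?posrE ?Re_lt1 //.
  by rewrite lerD2l lerN2 ler_pM2l.
have sumz : \sum_i zz i = 0.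
  by rewrite /zz sumrB sumw sumr_const card_ord mulr_natl subrr.
have Dsum : \sum_i ((W - W^+2) - (w i - (w i)^+2)) = \sum_i (zz i)^+2 - (1 - 2 * W) * \sum_i zz i.
  rewrite mulr_sumr -sumrB; apply: eq_bigr => i _; rewrite /zz; ring.
rewrite sumz mulr0 subr0 in Dsum.
have S0 : \sum_i zz i * (zz i)^* = 0.
  apply/eqP; rewrite eq_le sumr_ge0 ?andbT; last by move=> i _; exact: mul_conjC_ge0.
  under eq_bigr => i _ do rewrite zc mulrN -expr2.
  by rewrite sumrN -Dsum oppr_le0 sumr_ge0.
have Z i : zz i = 0.
  apply/eqP; rewrite -mul_conjC_eq0; apply/eqP.
  by apply: (psumr_eq0P _ S0) => // j _; exact: mul_conjC_ge0.
have i0 : (0 < q)%N := q0.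
have e : w (Ordinal q0) = w (Ordinal q1).
  by move: (Z (Ordinal q0)) (Z (Ordinal q1)); rewrite /zz => /eqP; rewrite subr_eq0 => /eqP -> /eqP; rewrite subr_eq0 => /eqP ->.
move/invr_inj: e => /eqP; rewrite /a /= expr0 mulr1 expr1 (inj_eq (addrI 1)) eqr_opp => /eqP e.
have x00 : x0 != 0.
  by rewrite rootC_eq0 // ; apply/eqP => u0; move: hu; rewrite u0 normr0 => /eqP; rewrite eq_sym oner_eq0.
have : z ^+ 1 == 1 by rewrite expr1; apply/eqP; apply: (mulfI x00); rewrite mulr1 -e.
by rewrite -(prim_order_dvd zp) dvdn1 gtn_eqF.
Qed.

Lemma m1_neq1 : (-1 : algC) != 1.
Proof. by apply/eqP => e; have := @ltrN10 algC; rewrite e ltr10. Qed.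

Lemma omega_prim (N : nat) : (1 < N)%N -> N.-primitive_root (omega N).
Proof.
move=> N1; have N0 : (0 < N)%N by apply: ltnW.
pose y := N.-root (-1 : algC).
have yN : y ^+ N = -1 by exact: rootCK.
have oN : omega N ^+ N = 1.
  by rewrite /omega -exprM mulnC exprM yN sqrrN expr1n.
have [m mp mN] := prim_order_exists N0 oN.
have m0 := prim_order_gt0 mp.
case: (eqVneq m N) => [e|mNe]; first by move: mp; rewrite e.
exfalso.
have ym2 : (y ^+ m) ^+ 2 = 1.
  by rewrite -exprM mulnC exprM; exact: (prim_expr_order mp).
have [q Nqm] : exists q, N = (q * m)%N by exists (N %/ m)%N; rewrite divnK.
have q1 : (1 < q)%N.
  move: Nqm; case: q => [|[|q']] // ; first by move=> e; rewrite e in N0.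
  by rewrite mul1n => e; rewrite e eqxx in mNe.
have ym : y ^+ m = -1.
  have : (y ^+ m - 1) * (y ^+ m + 1) = 0.
    by rewrite -subr_sqr ym2 expr1n subrr.
  move/eqP; rewrite mulf_eq0 => /orP [|].
    rewrite subr_eq0 => /eqP e; exfalso.
    move: yN; rewrite Nqm mulnC exprM e expr1n => e'.
    by move: m1_neq1; rewrite -e' eqxx.
  by rewrite addr_eq0 => /eqP.
have yn : `|y| = 1 by rewrite norm_rootC normrN normr1 rootC1.
have y1 : y != 1 by apply: contraTneq isT => e; move: yN; rewrite e expr1n => e'; move: m1_neq1; rewrite -e' eqxx.
have [x [xq xRe]] := @rootRe _ _ yn y1 q1.
have xN : x ^+ N = -1 by rewrite Nqm exprM xq.
have [Hi | Hi] := boolP (0 <= 'Im x).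
  by have := rootC_Re_max N0 xN Hi; rewrite real_leNgt ?algCreal_Re // xRe.
have xcN : x^* ^+ N = -1 by rewrite -rmorphXn xN rmorphN1.
have Hi' : 0 <= 'Im (x^*).
  rewrite Im_conj oppr_ge0; move: Hi; rewrite real_leNgt ?real0 ?algCreal_Im //.
  by apply: contra => /ltW.
by have := rootC_Re_max N0 xcN Hi'; rewrite Re_conj real_leNgt ?algCreal_Re // xRe.
Qed.

Lemma primN (N : nat) : (1 < N)%N -> ((Zp_trunc N).+2).-primitive_root (omega N).
Proof. by move=> N1; rewrite Zp_cast //; exact: omega_prim. Qed.

Lemma chiD (N : nat) (a b : 'Z_N) : (1 < N)%N -> chi (a + b) = chi a * chi b.
Proof.
move=> N1; rewrite /chi -exprD.
have -> : val (a + b) = ((val a + val b) %% (Zp_trunc N).+2)%N by [].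
by rewrite (prim_expr_mod (primN N N1)).
Qed.

Lemma chi0 (N : nat) : chi (0 : 'Z_N) = 1.
Proof. by rewrite /chi expr0. Qed.

Lemma chi_eq1 (N : nat) (a : 'Z_N) : (1 < N)%N -> (chi a == 1) = (a == 0).
Proof.
move=> N1; rewrite /chi -(prim_order_dvd (primN N N1)).
apply/idP/idP => [|/eqP -> //].
move=> /dvdn_leq; case: (posnP (val a)) => [a0 _|a0 /(_ isT)].
  by apply/eqP/val_inj.
by rewrite leqNgt ltn_ord.
Qed.

Lemma chi_norm (N : nat) (a : 'Z_N) : (1 < N)%N -> `|chi a| = 1.
Proof.
move=> N1; have N0 : (0 < N)%N by apply: ltnW.
have o1 : `|omega N| = 1.
  apply/eqP; rewrite -(pexpr_eq1 N0) ?normr_ge0 // -normrX.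
  by rewrite (prim_expr_order (omega_prim N N1)) normr1.
by rewrite /chi normrX o1 expr1n.
Qed.

Lemma dotD (N d : nat) (x m e : 'rV['Z_N]_d) : dotZ x (m + e) = dotZ x m + dotZ x e.
Proof. by rewrite /dotZ -big_split; apply: eq_bigr => i _; rewrite mxE mulrDr. Qed.

Lemma dotB (N d : nat) (x e m : 'rV['Z_N]_d) : dotZ x m - dotZ e m = dotZ (x - e) m.
Proof. by rewrite /dotZ -sumrB; apply: eq_bigr => i _; rewrite !mxE mulrBl. Qed.

Lemma dot0 (N d : nat) (m : 'rV['Z_N]_d) : dotZ 0 m = 0.
Proof. by rewrite /dotZ big1 // => i _; rewrite mxE mul0r. Qed.

Lemma card_rV (N d : nat) : (1 < N)%N -> #|{: 'rV['Z_N]_d}| = (N ^ d)%N.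
Proof. by move=> N1; rewrite card_mx card_ord Zp_cast // mul1n. Qed.

Lemma ortho (N d : nat) (t : 'rV['Z_N]_d) : (1 < N)%N ->
  \sum_m chi (dotZ t m) = if t == 0 then (N ^ d)%:R else 0.
Proof.
move=> N1; case: eqP => [-> | /eqP t0].
  under eq_bigr => m _ do rewrite dot0 chi0.
  by rewrite sumr_const card_rV.
have [i ti] : exists i, t 0 i != 0.
  apply/existsP; apply: contraR t0 => /existsPn H; apply/eqP/matrixP => a b.
  by rewrite ord1 mxE; move: (H b); rewrite negbK => /eqP.
pose e : 'rV['Z_N]_d := delta_mx 0 i.
have de : dotZ t e = t 0 i.
  rewrite /dotZ (bigD1 i) //= big1 ?addr0 => [|j ji]; first by rewrite mxE !eqxx mulr1.
  by rewrite mxE eqxx (negbTE ji) mulr0.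
set S := \sum_m _.
have : S = chi (t 0 i) * S.
  rewrite {1}/S (reindex_inj (addIr e)) /= mulr_sumr.
  by apply: eq_bigr => m _; rewrite dotD chiD // de mulrC.
move/eqP; rewrite -{1}[S]mul1r -subr_eq0 -mulrBl mulf_eq0 subr_eq0 eq_sym chi_eq1 //.
by rewrite (negbTE ti) => /eqP.
Qed.

Lemma inversion (N d : nat) (E : {set 'rV['Z_N]_d}) (x : 'rV['Z_N]_d) : (1 < N)%N ->
  \sum_m chi (dotZ x m) * hat1 E m = (x \in E)%:R.
Proof.
move=> N1; rewrite /hat1.
under eq_bigr => m _ do rewrite mulrCA mulr_sumr.
rewrite -mulr_sumr exchange_big /=.
under eq_bigr => e _ do (under eq_bigr => m _ do rewrite -chiD // dotB).
under eq_bigr => e _ do rewrite ortho // subr_eq0.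
have K : (N%:R ^+ d : algC)^-1 * (N ^ d)%:R = 1.
  by rewrite natrX mulVf // expf_neq0 // pnatr_eq0 -lt0n ltnW.
case: (boolP (x \in E)) => xE.
  rewrite (bigD1 x) //= eqxx big1 ?addr0 ?K // => e /andP[_ ne].
  by rewrite eq_sym (negbTE ne).
rewrite big1 ?mulr0 // => e eE; case: eqP => // xe.
by rewrite xe eE in xE.
Qed.

Theorem theorem4 (N d : nat) (E S : {set 'rV['Z_N]_d}) :
  (1 < N)%N -> (0 < d)%N ->
  (4 * (#|E| * #|S|) < N ^ d)%N ->
  forall x : 'rV['Z_N]_d, Gfun E S x = (x \in E)%:R.
Proof.
move=> N1 d0 H x.
pose f m := chi (dotZ x m) * hat1 E m.
pose err := \sum_(m in S) f m.
have rE : rfun E S x = (x \in E)%:R - err.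
  by rewrite -(@inversion N d E x N1) (bigID (mem S)) /= addrC addrK.
pose c : algC := (N%:R ^+ d)^-1.
have c0 : 0 <= c by rewrite invr_ge0 exprn_ge0 ?ler0n.
have fb m : `|f m| <= c * #|E|%:R.
  rewrite /f /hat1 normrM chi_norm // mul1r normrM (ger0_norm c0) ler_wpM2l //.
  apply: le_trans (ler_norm_sum _ _ _) _.
  rewrite -sum1_card natr_sum; apply: ler_sum => e _.
  by rewrite chi_norm.
have eb : `|err| <= #|S|%:R * (c * #|E|%:R).
  apply: le_trans (ler_norm_sum _ _ _) _.
  rewrite -sum1_card natr_sum mulr_suml; apply: ler_sum => m _.
  by rewrite mul1r.
have Nd0 : (0 : algC) < (N ^ d)%:R by rewrite ltr0n expn_gt0 ltnW.
have b4 : 4 * `|err| < 1.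
  apply: le_lt_trans (_ : 4 * (#|S|%:R * (c * #|E|%:R)) < 1).
    by rewrite ler_pM2l ?ltr0n.
  have -> : 4 * (#|S|%:R * (c * #|E|%:R)) = (4 * (#|E| * #|S|))%:R / (N ^ d)%:R :> algC by rewrite /c natrX !natrM; ring.
  by rewrite ltr_pdivrMr // mul1r ltr_nat.
set b := `|err| in b4.
have b0 : 0 <= b by exact: normr_ge0.
have h2 : 2 * b < 1.
  apply: le_lt_trans b4; apply: ler_wpM2r => //; by rewrite ler_nat.
have two0 : (0 : algC) < 2 by rewrite ltr0n.
rewrite /Gfun rE; case: (boolP (x \in E)) => xE.
  rewrite ifT //.
  apply: le_trans (_ : 2^-1 <= 1 - b) _; last first.
    by have := lerB_dist 1 err; rewrite normr1.
  rewrite -(ler_pM2l two0) mulfV ?gt_eqF // mulrBr mulr1 lerBrDr.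
  have -> : (2 : algC) = 1 + 1 by [].
  by rewrite addrC lerD2r ltW.
rewrite ifF // sub0r normrN.
apply: lt_geF; rewrite -(ltr_pM2l two0) mulfV ?gt_eqF //.
Qed.
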